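(* Let $G_1$ be a group whose centre $Z(G_1)$ has index $k$ in $G_1$ (with $k$ finite). Let $n,m\ge0$, let $G\le G_1^n$ be a subgroup, let $w(\bar x,\bar y)$ be a group word in the variables $\bar x=(x_1,\dots,x_n)$, $\bar y=(y_1,\dots,y_m)$ and their inverses, and let $\bar g\in G_1^m$, $c\in G_1$. If the set $\{\bar h\in G:w(\bar h,\bar g)=c\}$ is $2k^n$-large in $G$, then $w(\bar h,\bar g)=c$ for all $\bar h\in G$.
   Context: A subset $X\subseteq G$ is $k$-large in $G$ if the intersection of any $k$ left translates $\bar a_1X\cap\dots\cap\bar a_kX$ ($\bar a_i\in G$) is non-empty. *)

(* Defs.v *)
From mathcomp Require Import all_boot.
Set Implicit Arguments. Unset Strict Implicit. Unset Printing Implicit Defensive.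

Record grp := Grp {
  carrier :> Type;
  gmul : carrier -> carrier -> carrier;
  ginv : carrier -> carrier;
  gone : carrier;
  gmulA : forall x y z, gmul x (gmul y z) = gmul (gmul x y) z;
  gmul1g : forall x, gmul gone x = x;
  gmulVg : forall x, gmul (ginv x) x = gone
}.

Definition in_centre (G : grp) (z : G) : Prop := forall g : G, gmul z g = gmul g z.

(* The centre Z(G) has (finite) index k in G: there are exactly k left cosets
   of Z(G), given by pairwise inequivalent representatives r 0, ..., r (k-1)
   covering G. *)
Definition centre_index (G : grp) (k : nat) : Prop :=
  exists r : 'I_k -> G,
    (forall i j, in_centre (gmul (ginv (r i)) (r j)) -> i = j) /\
    (forall g : G, exists i, in_centre (gmul (ginv (r i)) g)).

Definition tmul (G : grp) n (a b : 'I_n -> G) : 'I_n -> G := fun i => gmul (a i) (b i).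
Definition tinv (G : grp) n (a : 'I_n -> G) : 'I_n -> G := fun i => ginv (a i).
Definition tone (G : grp) n : 'I_n -> G := fun _ => gone G.

Definition is_subgroup (G : grp) n (S : ('I_n -> G) -> Prop) : Prop :=
  S (@tone G n) /\
  (forall a b, S a -> S b -> S (tmul a b)) /\
  (forall a, S a -> S (tinv a)).

(* X (a subset of the subgroup S) is N-large in S: for any N left translates
   a_1 X, ..., a_N X with a_i in S, the intersection is non-empty, i.e. there
   is h with a_i^{-1} h in X for all i. *)
Definition is_large (G : grp) n (S X : ('I_n -> G) -> Prop) (N : nat) : Prop :=
  forall a : 'I_N -> ('I_n -> G), (forall i, S (a i)) ->
    exists h : 'I_n -> G, forall i, X (tmul (tinv (a i)) h).

Inductive word (V : Type) : Type :=
  | WVar of V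
  | WOne
  | WInv of word V
  | WMul of word V & word V.

Fixpoint weval (G : grp) (V : Type) (s : V -> G) (w : word V) : G :=
  match w with
  | WVar v => s v
  | WOne => gone G
  | WInv u => ginv (weval s u)
  | WMul u v => gmul (weval s u) (weval s v)
  end.

Definition weval2 (G : grp) n m (w : word ('I_n + 'I_m)) (h : 'I_n -> G) (g : 'I_m -> G) : G :=
  weval (fun v => match v with inl i => h i | inr j => g j end) w.

(* Main.v *)
Require Import Defs.
From mathcomp Require Import all_boot.
From Stdlib Require Import Classical ClassicalEpsilon FunctionalExtensionality.

Section GrpLemmas.
Variable G : grp.
Implicit Types x y z : G.

Lemma mulgV x : gmul x (ginv x) = gone G.
Proof.
have e : gmul x (ginv x) = gmul (gmul (ginv (ginv x)) (ginv x)) (gmul x (ginv x)).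
  by rewrite gmulVg gmul1g.
rewrite e -gmulA (gmulA (ginv x) x) gmulVg gmul1g. exact: gmulVg.
Qed.

Lemma mulg1 x : gmul x (gone G) = x.
Proof. by rewrite -(gmulVg x) gmulA mulgV gmul1g. Qed.

Lemma mulKg x y : gmul (ginv x) (gmul x y) = y.
Proof. by rewrite gmulA gmulVg gmul1g. Qed.

Lemma mulKVg x y : gmul x (gmul (ginv x) y) = y.
Proof. by rewrite gmulA mulgV gmul1g. Qed.

Lemma mulgI x y z : gmul x y = gmul x z -> y = z.
Proof. by move=> e; rewrite -(mulKg x y) e mulKg. Qed.

Lemma mulIg x y z : gmul y x = gmul z x -> y = z.
Proof.
move=> e; rewrite -(mulg1 y) -(mulg1 z) -(mulgV x) !gmulA e //.
Qed.

Lemma invgK x : ginv (ginv x) = x.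
Proof. apply: (@mulIg (ginv x)); by rewrite gmulVg mulgV. Qed.

Lemma invMg x y : ginv (gmul x y) = gmul (ginv y) (ginv x).
Proof.
apply: (@mulgI (gmul x y)). rewrite mulgV -gmulA (gmulA y) mulgV gmul1g mulgV //.
Qed.

Lemma cent1 : in_centre (gone G).
Proof. by move=> g; rewrite gmul1g mulg1. Qed.

Lemma centV z : in_centre z -> in_centre (ginv z).
Proof.
move=> cz g. apply: (@mulgI z). rewrite mulKVg gmulA cz -gmulA mulgV mulg1 //.
Qed.

Lemma centM z1 z2 : in_centre z1 -> in_centre z2 -> in_centre (gmul z1 z2).
Proof.
move=> c1 c2 g. by rewrite -gmulA c2 gmulA c1 gmulA.
Qed.

End GrpLemmas.
Arguments mulgV {G}. Arguments mulg1 {G}. Arguments mulKg {G}. Arguments mulKVg {G}.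
Arguments mulgI {G x y z}. Arguments mulIg {G x y z}. Arguments invgK {G}. Arguments invMg {G}.
Arguments cent1 {G}. Arguments centV {G z}. Arguments centM {G z1 z2}.

Lemma weval_cent (G : grp) (V : Type) (s t : V -> G) (w : word V) :
  (forall v, in_centre (t v)) ->
  in_centre (weval t w) /\
  weval (fun v => gmul (s v) (t v)) w = gmul (weval s w) (weval t w).
Proof.
move=> ct; elim: w => [v||u [cu IH]|u [cu IHu] v [cv IHv]] /=.
- by split.
- by split; [apply: cent1 | rewrite gmul1g].
- split; first exact: centV.
  by rewrite IH invMg (centV cu).
- split; first exact: centM.
  rewrite IHu IHv -!gmulA; congr (gmul _ _).
  by rewrite !gmulA cu.
Qed.

Lemma weval2_cent (G1 : grp) n m (w : word ('I_n + 'I_m)) (h z : 'I_n -> G1)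
  (g : 'I_m -> G1) : (forall i, in_centre (z i)) ->
  weval2 w (tmul h z) g = gmul (weval2 w h g) (weval2 w z (fun _ => gone G1)).
Proof.
move=> cz. rewrite /weval2.
set s := (fun v : 'I_n + 'I_m => match v with inl i => h i | inr j => g j end).
set t := (fun v : 'I_n + 'I_m => match v with inl i => z i | inr _ => gone G1 end).
have ct : forall v, in_centre (t v) by case=> [i|j] /=; [apply: cz | apply: cent1].
have [_ <-] := @weval_cent G1 _ s t w ct.
congr weval; apply: functional_extensionality; case=> [i|j] //=.
by rewrite mulg1.
Qed.

Theorem corollary3p6 (G1 : grp) (k n m : nat) (hk : centre_index G1 k)
  (S : ('I_n -> G1) -> Prop) (hS : is_subgroup S)
  (w : word ('I_n + 'I_m)) (g : 'I_m -> G1) (c : G1) :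
  is_large S (fun h => S h /\ weval2 w h g = c) (2 * k ^ n) ->
  forall h, S h -> weval2 w h g = c.
Proof.
move=> Hl h0 Sh0. apply: NNPP => Hne.
case: hk => r [_ cover].
case: hS => [S1 [SM SV]].
pose phi z := weval2 w z (fun _ => gone G1).
pose Zc (z : 'I_n -> G1) := forall i, in_centre (z i).
have [z1 [Sz1 [Zz1 Hz1]]] : exists z1, S z1 /\ Zc z1 /\
   ((exists z, S z /\ Zc z /\ weval2 w (tmul h0 z) g = c) ->
      weval2 w (tmul h0 z1) g = c).
  case: (classic (exists z, S z /\ Zc z /\ weval2 w (tmul h0 z) g = c)).
    by move=> [z [Sz [Zz e]]]; exists z; split=> //; split.
  move=> nex; exists (@tone G1 n); split=> //; split=> //.
  by move=> i; apply: cent1.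
pose rho (x : G1) : 'I_k := proj1_sig (constructive_indefinite_description _ (cover x)).
have rhoP : forall x, in_centre (gmul (ginv (r (rho x))) x).
  by move=> x; rewrite /rho; case: constructive_indefinite_description.
pose rhoF (x : 'I_n -> G1) : {ffun 'I_n -> 'I_k} := [ffun i => rho (x i)].
have srep : forall sg : {ffun 'I_n -> 'I_k},
    {s | S s /\ ((exists x, S x /\ rhoF x = sg) -> rhoF s = sg)}.
  move=> sg; apply: constructive_indefinite_description.
  case: (classic (exists x, S x /\ rhoF x = sg)).
    by move=> [x [Sx e]]; exists x; split.
  by move=> nex; exists (@tone G1 n); split.
pose T := (bool * {ffun 'I_n -> 'I_k})%type.
pose F (t : T) : 'I_n -> G1 := let s := proj1_sig (srep t.2) in
  if t.1 then tmul (tmul s z1) (tinv h0) else tmul s (tinv h0).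
have SF : forall t, S (F t).
  case=> b sg; rewrite /F /=; case: (srep sg) => s [Ss _] /=.
  by case: b => /=; auto.
have e : #|{: bool * {ffun 'I_n -> 'I_k}}| = 2 * k ^ n by rewrite card_prod card_ffun !card_ord card_bool.
pose a (i : 'I_(2 * k ^ n)) := F (enum_val (cast_ord (esym e) i)).
have [h' Hh'] := Hl a (fun i => SF _).
have key : forall t, S (tmul (tinv (F t)) h') /\ weval2 w (tmul (tinv (F t)) h') g = c.
  by move=> t; have := Hh' (cast_ord e (enum_rank t)); rewrite /a cast_ordK enum_rankK.
have Sh' : S h'.
  have [S0 _] := key (false, rhoF h').
  have := SM _ _ (SF (false, rhoF h')) S0.
  congr S; apply: functional_extensionality => i.
  by rewrite /tmul /tinv mulKVg.
have [s [Ss Hs]] : exists s, S s /\ proj1_sig (srep (rhoF h')) = s /\ rhoF s = rhoF h'.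
  case: (srep (rhoF h')) => s [Ss Hs] /=; exists s; split=> //; split=> //.
  by apply: Hs; exists h'.
case: Hs => Hs Hrs.
pose z := tmul (tinv s) h'.
have Zz : Zc z.
  move=> i; rewrite /z /tmul /tinv.
  have ei : rho (s i) = rho (h' i).
    by have := congr1 (fun f : {ffun 'I_n -> 'I_k} => f i) Hrs; rewrite /rhoF !ffunE.
  have -> : gmul (ginv (s i)) (h' i) =
     gmul (ginv (gmul (ginv (r (rho (s i)))) (s i))) (gmul (ginv (r (rho (h' i)))) (h' i)).
    by rewrite invMg invgK ei -gmulA mulKVg.
  by apply: centM; [apply: centV |]; apply: rhoP.
have Sz : S z by apply: SM => //; apply: SV.
have [_ E0] := key (false, rhoF h').
have [_ E1] := key (true, rhoF h').
rewrite /F /= Hs in E0 E1.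
have Q0 : tmul (tinv (tmul s (tinv h0))) h' = tmul h0 z.
  apply: functional_extensionality => i.
  by rewrite /z /tmul /tinv invMg invgK -gmulA.
have Q1 : tmul (tinv (tmul (tmul s z1) (tinv h0))) h' = tmul (tmul h0 (tinv z1)) z.
  apply: functional_extensionality => i.
  by rewrite /z /tmul /tinv !invMg invgK -!gmulA.
rewrite Q0 in E0; rewrite Q1 in E1.
have E2 : weval2 w (tmul h0 z1) g = c by apply: Hz1; exists z.
rewrite weval2_cent // in E0.
rewrite weval2_cent // -E0 in E1.
have E3 := mulIg E1.
apply: Hne.
have <- : tmul (tmul h0 (tinv z1)) z1 = h0.
  apply: functional_extensionality => i.
  by rewrite /tmul /tinv -gmulA gmulVg mulg1.
by rewrite weval2_cent // E3 -weval2_cent.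
Qed.
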